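(* Let $A \in \mathbb{R}^{m\times n}$, $B \in \mathbb{R}^{n\times m}$, nonzero $b\in\mathbb{R}^m$, $c\in\mathbb{R}^n$, $\lambda,\mu\in\mathbb{R}$, $K := \begin{bmatrix} \lambda I_m & A \\ B & \mu I_n\end{bmatrix}$, $d := (b,c) \in \mathbb{R}^{m+n}$ and $D := \begin{bmatrix} b & 0 \\ 0 & c\end{bmatrix} \in \mathbb{R}^{(m+n)\times 2}$. Let $k\ge 1$ and suppose the orthogonal Hessenberg reduction process (described in the context) runs without breakdown for $k-1$ steps. Then: (i) the column space of $W_k$ equals the block Krylov subspace $\mathcal{K}_k(K,D) := \operatorname{span}\{\text{columns of } D, KD, \ldots, K^{k-1}D\}$; (ii) $\mathcal{K}_k(K,d) := \operatorname{span}\{d, Kd, \ldots, K^{k-1}d\} \subseteq \mathcal{K}_k(K,D)$; (iii) consequently $\min_{z\in\mathbb{R}^{2k}} \|d - K W_k z\| \le \min_{x \in \mathcal{K}_k(K,d)} \|d - Kx\|$, i.e. the residual norm of the minimum-residual iterate over the column space of $W_k$ is at most the residual norm of the $k$-th \textsc{Gmres} iterate (with zero initial guess) for $Kx = d$.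
   Context: Orthogonal Hessenberg reduction process. Given $A \in \mathbb{R}^{m\times n}$, $B\in\mathbb{R}^{n\times m}$ and nonzero $b\in\mathbb{R}^m$, $c \in \mathbb{R}^n$: set $\beta = \|b\|$, $\gamma = \|c\|$, $v_1 = b/\beta$, $u_1 = c/\gamma$. For $k=1,2,\ldots$: for $i=1,\ldots,k$ set $h_{i,k} = v_i^T A u_k$ and $f_{i,k} = u_i^T B v_k$; set $q = A u_k - \sum_{i=1}^k h_{i,k} v_i$, $p = B v_k - \sum_{i=1}^k f_{i,k} u_i$, $h_{k+1,k} = \|q\|$, $f_{k+1,k} = \|p\|$, $v_{k+1} = q/h_{k+1,k}$, $u_{k+1} = p/f_{k+1,k}$. The process runs without breakdown for $k$ steps if $h_{j+1,j}>0$ and $f_{j+1,j}>0$ for $j=1,\ldots,k$. Norms are Euclidean. For $i \le k$ define $v_i^\circ := (v_i, 0) \in \mathbb{R}^{m+n}$ and $u_i^\circ := (0,u_i)\in\mathbb{R}^{m+n}$, and $W_k := \begin{bmatrix} v_1^\circ & u_1^\circ & v_2^\circ & u_2^\circ & \cdots & v_k^\circ & u_k^\circ\end{bmatrix} \in \mathbb{R}^{(m+n)\times 2k}$. *)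

(* Defs.v *)
From HB Require Import structures.
From mathcomp Require Import all_boot all_order all_algebra.
Set Implicit Arguments. Unset Strict Implicit. Unset Printing Implicit Defensive.
Import Order.TTheory GRing.Theory Num.Theory.
Local Open Scope ring_scope.

Definition dotv (R : rcfType) (N : nat) (x y : 'cV[R]_N) : R := (x^T *m y) 0 0.
Definition normv (R : rcfType) (N : nat) (x : 'cV[R]_N) : R := Num.sqrt (dotv x x).

(* Given vs = [v_1;..;v_k], us = [u_1;..;u_k]:
   q = A u_k - sum_{i<=k} (v_i^T A u_k) v_i   (so h_{k+1,k} = ||q||)
   p = B v_k - sum_{i<=k} (u_i^T B v_k) u_i   (so f_{k+1,k} = ||p||) *)
Definition ohr_q (R : rcfType) (m n : nat) (A : 'M[R]_(m, n))
  (vs : seq 'cV[R]_m) (us : seq 'cV[R]_n) : 'cV[R]_m :=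
  let uk := last 0 us in A *m uk - \sum_(v <- vs) dotv v (A *m uk) *: v.
Definition ohr_p (R : rcfType) (m n : nat) (B : 'M[R]_(n, m))
  (vs : seq 'cV[R]_m) (us : seq 'cV[R]_n) : 'cV[R]_n :=
  let vk := last 0 vs in B *m vk - \sum_(u <- us) dotv u (B *m vk) *: u.

(* ohr A B b c j = ([v_1;..;v_{j+1}], [u_1;..;u_{j+1}]) : the vectors produced
   by the orthogonal Hessenberg reduction process after j steps. *)
Fixpoint ohr (R : rcfType) (m n : nat) (A : 'M[R]_(m, n)) (B : 'M[R]_(n, m))
  (b : 'cV[R]_m) (c : 'cV[R]_n) (j : nat) : seq 'cV[R]_m * seq 'cV[R]_n :=
  match j with
  | 0 => ([:: (normv b)^-1 *: b], [:: (normv c)^-1 *: c])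
  | j'.+1 =>
      let vu := ohr A B b c j' in
      let q := ohr_q A vu.1 vu.2 in
      let p := ohr_p B vu.1 vu.2 in
      (rcons vu.1 ((normv q)^-1 *: q), rcons vu.2 ((normv p)^-1 *: p))
  end.

(* h_{j+1,j} and f_{j+1,j}, for j >= 1. *)
Definition ohr_h (R : rcfType) (m n : nat) (A : 'M[R]_(m, n)) (B : 'M[R]_(n, m))
  (b : 'cV[R]_m) (c : 'cV[R]_n) (j : nat) : R :=
  let vu := ohr A B b c j.-1 in normv (ohr_q A vu.1 vu.2).
Definition ohr_f (R : rcfType) (m n : nat) (A : 'M[R]_(m, n)) (B : 'M[R]_(n, m))
  (b : 'cV[R]_m) (c : 'cV[R]_n) (j : nat) : R :=
  let vu := ohr A B b c j.-1 in normv (ohr_p B vu.1 vu.2).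

Definition no_breakdown (R : rcfType) (m n : nat) (A : 'M[R]_(m, n)) (B : 'M[R]_(n, m))
  (b : 'cV[R]_m) (c : 'cV[R]_n) (k : nat) : Prop :=
  forall j : nat, (1 <= j <= k)%N -> 0 < ohr_h A B b c j /\ 0 < ohr_f A B b c j.

(* W_k = [v_1° u_1° v_2° u_2° ... v_k° u_k°]  (column with 0-based index j is
   v_{j/2+1}° if j is even and u_{j/2+1}° if j is odd). *)
Definition Wmat (R : rcfType) (m n : nat) (A : 'M[R]_(m, n)) (B : 'M[R]_(n, m))
  (b : 'cV[R]_m) (c : 'cV[R]_n) (k : nat) : 'M[R]_(m + n, 2 * k) :=
  let vu := ohr A B b c k.-1 in
  \matrix_(r < m + n, j < 2 * k)
    (if odd j then col_mx 0 (nth 0 vu.2 j./2) else col_mx (nth 0 vu.1 j./2) 0) r 0.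

(* Block Krylov subspace K_k(K, X) = span of the columns of X, KX, ..., K^{k-1}X,
   represented (mxalgebra convention) as the row space of the transposes. *)
Definition krylov (R : rcfType) (N p : nat) (K : 'M[R]_N) (X : 'M[R]_(N, p)) (k : nat)
  : 'M[R]_N := (\sum_(j < k) <<((K ^+ j) *m X)^T>>)%MS.

(* Main.v *)
Require Import Defs.
From HB Require Import structures.
From mathcomp Require Import all_boot all_order all_algebra.
From mathcomp Require Import zify.
Set Implicit Arguments. Unset Strict Implicit. Unset Printing Implicit Defensive.
Import Order.TTheory GRing.Theory Num.Theory.
Local Open Scope ring_scope.


Definition memS (R : rcfType) (N : nat) (S : 'M[R]_N) (x : 'cV[R]_N) := (x^T <= S)%MS.

Lemma memS0 (R : rcfType) N (S : 'M[R]_N) : memS S 0.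
Proof. by rewrite /memS trmx0 sub0mx. Qed.
Lemma memSD (R : rcfType) N (S : 'M[R]_N) x y : memS S x -> memS S y -> memS S (x + y).
Proof. by rewrite /memS linearD /=; apply: addmx_sub. Qed.
Lemma memSZ (R : rcfType) N (S : 'M[R]_N) a x : memS S x -> memS S (a *: x).
Proof. by rewrite /memS linearZ /=; apply: scalemx_sub. Qed.
Lemma memSN (R : rcfType) N (S : 'M[R]_N) x : memS S x -> memS S (- x).
Proof. by move=> h; rewrite -scaleN1r memSZ. Qed.
Lemma memSB (R : rcfType) N (S : 'M[R]_N) x y : memS S x -> memS S y -> memS S (x - y).
Proof. by move=> hx hy; rewrite memSD ?memSN. Qed.
Lemma memS_sum (R : rcfType) N (S : 'M[R]_N) (I : eqType) (s : seq I) (F : I -> 'cV[R]_N) :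
  (forall i, i \in s -> memS S (F i)) -> memS S (\sum_(i <- s) F i).
Proof.
elim: s => [|a s IH] h; first by rewrite big_nil memS0.
rewrite big_cons; apply: memSD; first by apply: h; rewrite mem_head.
apply: IH => i hi; apply: h; by rewrite in_cons hi orbT.
Qed.
Lemma memS_le (R : rcfType) N (S S' : 'M[R]_N) x : (S <= S')%MS -> memS S x -> memS S' x.
Proof. by move=> h1 h2; apply: submx_trans h2 h1. Qed.

Lemma memS_shift (R : rcfType) N (j : nat) (G : 'I_j -> 'M[R]_N) (K S' : 'M[R]_N) x :
  (forall i, (G i *m K^T <= S')%MS) -> memS (\sum_(i < j) G i)%MS x -> memS S' (K *m x).
Proof.
move=> hG hx; rewrite /memS trmx_mul.
apply: submx_trans (submxMr _ hx) _.
rewrite (sumsmxMr _ _ K^T); apply/sumsmx_subP => i _; exact: hG.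
Qed.

Lemma dotvC (R : rcfType) N (x y : 'cV[R]_N) : dotv x y = dotv y x.
Proof. by rewrite /dotv !mxE; apply: eq_bigr => i _; rewrite !mxE mulrC. Qed.
Lemma dotv_sqr (R : rcfType) N (x : 'cV[R]_N) : dotv x x = \sum_i x i 0 ^+ 2.
Proof. by rewrite /dotv mxE; apply: eq_bigr => i _; rewrite mxE expr2. Qed.
Lemma dotv_ge0 (R : rcfType) N (x : 'cV[R]_N) : 0 <= dotv x x.
Proof. by rewrite dotv_sqr sumr_ge0 // => i _; rewrite sqr_ge0. Qed.
Lemma dotv_eq0 (R : rcfType) N (x : 'cV[R]_N) : (dotv x x == 0) = (x == 0).
Proof.
apply/idP/idP => [|/eqP->]; last by rewrite /dotv mulmx0 mxE.
rewrite dotv_sqr psumr_eq0 => [/allP h|i _]; last by rewrite sqr_ge0.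
apply/eqP/matrixP => i j; rewrite (ord1 j) mxE.
by have /implyP/(_ isT) := h i (mem_index_enum _); rewrite sqrf_eq0 => /eqP.
Qed.
Lemma dotvDl (R : rcfType) N (x y z : 'cV[R]_N) : dotv (x + y) z = dotv x z + dotv y z.
Proof. by rewrite /dotv linearD mulmxDl mxE. Qed.
Lemma dotvDr (R : rcfType) N (x y z : 'cV[R]_N) : dotv z (x + y) = dotv z x + dotv z y.
Proof. by rewrite /dotv mulmxDr mxE. Qed.
Lemma normv_le (R : rcfType) N (x y : 'cV[R]_N) : dotv x x <= dotv y y -> normv x <= normv y.
Proof. by move=> h; rewrite /normv ler_sqrt // dotv_ge0. Qed.
Lemma normv_neq0 (R : rcfType) N (x : 'cV[R]_N) : x != 0 -> normv x != 0.
Proof.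
move=> h; rewrite /normv sqrtr_eq0 -ltNge lt0r dotv_eq0 h dotv_ge0 //.
Qed.


Lemma lsq (R : rcfType) N p (M : 'M[R]_(N, p)) (d : 'cV[R]_N) :
  exists z, forall z', normv (d - M *m z) <= normv (d - M *m z').
Proof.
pose G := M^T *m M.
have k1 : (kermx G <= kermx M^T)%MS.
  apply/row_subP => i; set w := row i _.
  have wG : w *m G = 0 by apply/eqP; rewrite -sub_kermx row_sub.
  rewrite sub_kermx; apply/eqP.
  have e : dotv (M *m w^T) (M *m w^T) = 0.
    by rewrite /dotv trmx_mul trmxK mulmxA -(mulmxA w) -/G wG mul0mx mxE.
  move/eqP: e; rewrite dotv_eq0 => /eqP e.
  by rewrite -[w *m _]trmxK trmx_mul trmxK e trmx0.
have k2 : (kermx M^T <= kermx G)%MS.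
  by rewrite sub_kermx /G mulmxA; move: (mulmx_ker M^T) => ->; rewrite mul0mx.
have rk : \rank G = \rank M.
  have := mxrank_ker G; have := mxrank_ker M^T.
  have -> : \rank (kermx G) = \rank (kermx M^T) by apply/eqP; rewrite eqn_leq !mxrankS.
  rewrite mxrank_tr => h1 h2.
  have := rank_leq_row G; have := rank_leq_row M^T; rewrite mxrank_tr.
  lia.
have sGM : (G <= M)%MS by apply: submxMl.
have eGM : (G == M)%MS by rewrite -(mxrank_leqif_eq sGM).2 rk.
have : (d^T *m M <= G)%MS by rewrite (eqmxP eGM) submxMl.
case/submxP => w hw.
exists w^T => z'.
set r := d - M *m w^T.
have rM : r^T *m M = 0.
  by rewrite /r linearB /= mulmxBl trmx_mul trmxK hw -mulmxA subrr.
have -> : d - M *m z' = r + M *m (w^T - z').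
  by rewrite /r mulmxBr addrA subrK.
clearbody r; apply: normv_le.
rewrite dotvDl !dotvDr.
have h0 : dotv r (M *m (w^T - z')) = 0 by rewrite /dotv mulmxA rM mul0mx mxE.
by rewrite (dotvC _ r) h0 !add0r addr0 lerDl dotv_ge0.
Qed.


Section Ohr.
Variables (R : rcfType) (m n : nat) (A : 'M[R]_(m, n)) (B : 'M[R]_(n, m))
  (b : 'cV[R]_m) (c : 'cV[R]_n).

Local Notation ohr := (ohr A B b c).

Lemma ohr_size j : size (ohr j).1 = j.+1 /\ size (ohr j).2 = j.+1.
Proof. by elim: j => [|j [h1 h2]] //=; rewrite !size_rcons h1 h2. Qed.

Lemma ohr_prefix i t l : (l <= i)%N ->
  nth 0 (ohr (i + t)).1 l = nth 0 (ohr i).1 l /\ nth 0 (ohr (i + t)).2 l = nth 0 (ohr i).2 l.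
Proof.
move=> li; elim: t => [|t [h1 h2]]; first by rewrite addn0.
rewrite addnS /= !nth_rcons !(ohr_size (i + t)).1 !(ohr_size (i + t)).2.
have -> : (l < (i + t).+1)%N by lia.
by [].
Qed.

Definition Vv i := nth 0 (ohr i).1 i.
Definition Uu i := nth 0 (ohr i).2 i.

Lemma ohr_nth j l : (l <= j)%N -> nth 0 (ohr j).1 l = Vv l /\ nth 0 (ohr j).2 l = Uu l.
Proof. by move=> lj; rewrite -(subnKC lj); apply: ohr_prefix. Qed.

Lemma ohr_mem1 j v : v \in (ohr j).1 -> exists2 l, (l <= j)%N & v = Vv l.
Proof.
move=> /(nthP 0) [l]; rewrite (ohr_size j).1 ltnS => lj <-.
by exists l => //; rewrite (ohr_nth lj).1.
Qed.
Lemma ohr_mem2 j v : v \in (ohr j).2 -> exists2 l, (l <= j)%N & v = Uu l.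
Proof.
move=> /(nthP 0) [l]; rewrite (ohr_size j).2 ltnS => lj <-.
by exists l => //; rewrite (ohr_nth lj).2.
Qed.

Lemma ohr_last1 j : last 0 (ohr j).1 = Vv j.
Proof. by rewrite -nth_last (ohr_size j).1. Qed.
Lemma ohr_last2 j : last 0 (ohr j).2 = Uu j.
Proof. by rewrite -nth_last (ohr_size j).2. Qed.

Definition qq j := ohr_q A (ohr j).1 (ohr j).2.
Definition pp j := ohr_p B (ohr j).1 (ohr j).2.

Lemma Vv_succ j : Vv j.+1 = (normv (qq j))^-1 *: qq j.
Proof. by rewrite /Vv /= nth_rcons (ohr_size j).1 ltnn eqxx. Qed.
Lemma Uu_succ j : Uu j.+1 = (normv (pp j))^-1 *: pp j.
Proof. by rewrite /Uu /= nth_rcons (ohr_size j).2 ltnn eqxx. Qed.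
Lemma Vv0 : Vv 0 = (normv b)^-1 *: b. Proof. by []. Qed.
Lemma Uu0 : Uu 0 = (normv c)^-1 *: c. Proof. by []. Qed.

Lemma qq_eq j : qq j = A *m Uu j - \sum_(v <- (ohr j).1) dotv v (A *m Uu j) *: v.
Proof. by rewrite /qq /ohr_q ohr_last2. Qed.
Lemma pp_eq j : pp j = B *m Vv j - \sum_(u <- (ohr j).2) dotv u (B *m Vv j) *: u.
Proof. by rewrite /pp /ohr_p ohr_last1. Qed.

End Ohr.


Section Kry.
Variables (R : rcfType) (N p : nat) (K : 'M[R]_N) (X : 'M[R]_(N, p)).

Lemma kry_gen i j (y : 'cV[R]_p) : (i < j)%N -> memS (krylov K X j) (K ^+ i *m X *m y).
Proof.
move=> ij; rewrite /memS /krylov trmx_mul.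
apply: submx_trans (submxMl _ _) _.
apply: (sumsmx_sup (Ordinal ij)) => //=; by rewrite genmxE.
Qed.

Lemma kry_mono j j' : (j <= j')%N -> (krylov K X j <= krylov K X j')%MS.
Proof.
move=> jj; apply/sumsmx_subP => i _.
have ij : (i < j')%N by apply: leq_trans (ltn_ord i) jj.
by apply: (sumsmx_sup (Ordinal ij)).
Qed.

Lemma kry_shift j x : memS (krylov K X j) x -> memS (krylov K X j.+1) (K *m x).
Proof.
apply: memS_shift => i; rewrite (eqmxMr _ (genmxE _)) -trmx_mul mulmxA.
have -> : K *m K ^+ i = K ^+ i.+1 by rewrite exprS mulmxE.
have ij : (i.+1 < j.+1)%N by rewrite ltnS ltn_ord.
apply: (sumsmx_sup (Ordinal ij)) => //=; by rewrite genmxE.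
Qed.

End Kry.

Section Blk.
Variables (R : rcfType) (m n : nat) (A : 'M[R]_(m, n)) (B : 'M[R]_(n, m)) (lam mu : R).

Definition P1 : 'M[R]_(m + n, m) := col_mx 1%:M 0.
Definition P2 : 'M[R]_(m + n, n) := col_mx 0 1%:M.

Lemma P1E (x : 'cV[R]_m) : P1 *m x = col_mx x 0.
Proof. by rewrite /P1 mul_col_mx mul1mx mul0mx. Qed.
Lemma P2E (x : 'cV[R]_n) : P2 *m x = col_mx 0 x.
Proof. by rewrite /P2 mul_col_mx mul1mx mul0mx. Qed.

Lemma KP1 (x : 'cV[R]_m) : block_mx lam%:M A B mu%:M *m (P1 *m x) = lam *: (P1 *m x) + P2 *m (B *m x).
Proof.
rewrite !P1E P2E mul_block_col !mulmx0 !addr0 mul_scalar_mx scale_col_mx scaler0.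
by rewrite add_col_mx add0r addr0.
Qed.
Lemma KP2 (y : 'cV[R]_n) : block_mx lam%:M A B mu%:M *m (P2 *m y) = P1 *m (A *m y) + mu *: (P2 *m y).
Proof.
rewrite !P2E P1E mul_block_col !mulmx0 !add0r mul_scalar_mx scale_col_mx scaler0.
by rewrite add_col_mx add0r addr0.
Qed.

End Blk.


Section Main.
Variables (R : rcfType) (m n : nat) (A : 'M[R]_(m, n)) (B : 'M[R]_(n, m))
  (b : 'cV[R]_m) (c : 'cV[R]_n) (lam mu : R).

Local Notation K := (block_mx lam%:M A B mu%:M : 'M[R]_(m + n)).
Local Notation D := (block_mx b 0 0 c : 'M[R]_(m + n, 1 + 1)).
Local Notation V := (Vv A B b c).
Local Notation U := (Uu A B b c).

Definition Sm j : 'M[R]_(m + n) :=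
  (\sum_(i < j) (<<(P1 R m n *m V i)^T>> + <<(P2 R m n *m U i)^T>>))%MS.

Lemma Sm_gen1 i j : (i < j)%N -> memS (Sm j) (P1 R m n *m V i).
Proof.
move=> ij; apply: (sumsmx_sup (Ordinal ij)) => //=.
by apply: submx_trans (addsmxSl _ _); rewrite genmxE.
Qed.
Lemma Sm_gen2 i j : (i < j)%N -> memS (Sm j) (P2 R m n *m U i).
Proof.
move=> ij; apply: (sumsmx_sup (Ordinal ij)) => //=.
by apply: submx_trans (addsmxSr _ _); rewrite genmxE.
Qed.
Lemma Sm_mono j j' : (j <= j')%N -> (Sm j <= Sm j')%MS.
Proof.
move=> jj; apply/sumsmx_subP => i _.
have ij : (i < j')%N by apply: leq_trans (ltn_ord i) jj.
by apply: (sumsmx_sup (Ordinal ij)).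
Qed.

Lemma BV_eq i : normv (pp A B b c i) != 0 ->
  B *m V i = normv (pp A B b c i) *: U i.+1 + \sum_(u <- (ohr A B b c i).2) dotv u (B *m V i) *: u.
Proof.
move=> h; rewrite Uu_succ scalerA divff // scale1r pp_eq subrK //.
Qed.
Lemma AU_eq i : normv (qq A B b c i) != 0 ->
  A *m U i = normv (qq A B b c i) *: V i.+1 + \sum_(v <- (ohr A B b c i).1) dotv v (A *m U i) *: v.
Proof.
move=> h; rewrite Vv_succ scalerA divff // scale1r qq_eq subrK //.
Qed.

Lemma Sm_shift j x :
  (forall i, (i < j)%N -> normv (pp A B b c i) != 0 /\ normv (qq A B b c i) != 0) ->
  memS (Sm j) x -> memS (Sm j.+1) (K *m x).
Proof.
move=> hnz; apply: memS_shift => i.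
rewrite (addsmxMr _ _ _) addsmx_sub !(eqmxMr _ (genmxE _)) -!trmx_mul.
have [hp hq] := hnz i (ltn_ord i).
have ij : (i < j.+1)%N by apply: leq_trans (ltn_ord i) _.
have ij1 : (i.+1 < j.+1)%N by rewrite ltnS ltn_ord.
have h1 : memS (Sm j.+1) (K *m (P1 R m n *m V i)).
  rewrite KP1 (BV_eq hp) mulmxDr mulmx_sumr -scalemxAr.
  apply: memSD; first exact/memSZ/Sm_gen1.
  apply: memSD; first exact/memSZ/Sm_gen2.
  apply: memS_sum => u /ohr_mem2 [l li ->]; rewrite -scalemxAr; apply/memSZ/Sm_gen2.
  by apply: leq_ltn_trans li _.
have h2 : memS (Sm j.+1) (K *m (P2 R m n *m U i)).
  rewrite KP2 (AU_eq hq) mulmxDr mulmx_sumr -scalemxAr.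
  apply: memSD; last exact/memSZ/Sm_gen2.
  apply: memSD; first exact/memSZ/Sm_gen1.
  apply: memS_sum => v /ohr_mem1 [l li ->]; rewrite -scalemxAr; apply/memSZ/Sm_gen1.
  by apply: leq_ltn_trans li _.
by apply/andP; split.
Qed.


Lemma DP1 : D *m col_mx 1%:M 0 = P1 R m n *m b.
Proof. by rewrite P1E mul_block_col !mulmx0 !mulmx1 !addr0. Qed.
Lemma DP2 : D *m col_mx 0 1%:M = P2 R m n *m c.
Proof. by rewrite P2E mul_block_col !mulmx0 !mulmx1 !add0r. Qed.

Lemma kryV i : forall l, (l <= i)%N ->
  memS (krylov K D i.+1) (P1 R m n *m V l) /\ memS (krylov K D i.+1) (P2 R m n *m U l).
Proof.
elim: i => [|i IH] l.
  have e0 : K ^+ 0 *m D = D by rewrite expr0 -idmxE mul1mx.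
  rewrite leqn0 => /eqP ->; rewrite Vv0 Uu0 -!scalemxAr; split; apply: memSZ.
    by have := @kry_gen _ _ _ K D 0 1 (col_mx 1%:M 0) isT; rewrite e0 DP1.
  by have := @kry_gen _ _ _ K D 0 1 (col_mx 0 1%:M) isT; rewrite e0 DP2.
rewrite leq_eqVlt => /orP [/eqP ->|]; last first.
  rewrite ltnS => /IH [h1 h2]; split; apply: memS_le h1 || apply: memS_le h2;
  by apply: kry_mono.
have [h1 h2] := IH i (leqnn i).
split.
- rewrite Vv_succ qq_eq -scalemxAr; apply: memSZ; rewrite mulmxBr mulmx_sumr.
  apply: memSB.
    have -> : P1 R m n *m (A *m U i) = K *m (P2 R m n *m U i) - mu *: (P2 R m n *m U i).
      by rewrite KP2 addrK.
    apply: memSB; first exact: kry_shift.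
    by apply/memSZ; apply: memS_le h2; apply: kry_mono.
  apply: memS_sum => v /ohr_mem1 [l' li ->]; rewrite -scalemxAr; apply: memSZ.
  by have [h3 _] := IH l' li; apply: memS_le h3; apply: kry_mono.
- rewrite Uu_succ pp_eq -scalemxAr; apply: memSZ; rewrite mulmxBr mulmx_sumr.
  apply: memSB.
    have -> : P2 R m n *m (B *m V i) = K *m (P1 R m n *m V i) - lam *: (P1 R m n *m V i).
      by rewrite KP1 addrC addKr.
    apply: memSB; first exact: kry_shift.
    by apply/memSZ; apply: memS_le h1; apply: kry_mono.
  apply: memS_sum => u /ohr_mem2 [l' li ->]; rewrite -scalemxAr; apply: memSZ.
  by have [_ h3] := IH l' li; apply: memS_le h3; apply: kry_mono.
Qed.

End Main.


Section Main2.
Variables (R : rcfType) (m n : nat) (A : 'M[R]_(m, n)) (B : 'M[R]_(n, m))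
  (b : 'cV[R]_m) (c : 'cV[R]_n) (lam mu : R).

Local Notation K := (block_mx lam%:M A B mu%:M : 'M[R]_(m + n)).
Local Notation D := (block_mx b 0 0 c : 'M[R]_(m + n, 1 + 1)).
Local Notation V := (Vv A B b c).
Local Notation U := (Uu A B b c).

Lemma memS_mx11 N (S : 'M[R]_N) x (u : 'M[R]_1) : memS S x -> memS S (x *m u).
Proof. by move=> h; rewrite [u]mx11_scalar mul_mx_scalar memSZ. Qed.

Lemma SmD k i (y : 'cV[R]_(1 + 1)) : b != 0 -> c != 0 -> no_breakdown A B b c k.-1 ->
  (i < k)%N -> memS (Sm A B b c i.+1) (K ^+ i *m D *m y).
Proof.
move=> hb hc nb; elim: i => [|i IH] ik.
  rewrite expr0 -idmxE mul1mx -[y]vsubmxK mul_block_col !mul0mx addr0 add0r.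
  have -> : col_mx (b *m usubmx y) (c *m dsubmx y) =
     P1 R m n *m b *m usubmx y + P2 R m n *m c *m dsubmx y.
    by rewrite -!mulmxA P1E P2E add_col_mx addr0 add0r.
  apply: memSD; apply: memS_mx11.
    have -> : P1 R m n *m b = normv b *: (P1 R m n *m V 0).
      by rewrite Vv0 -scalemxAr scalerA divff ?scale1r ?normv_neq0.
    by rewrite memSZ // Sm_gen1.
  have -> : P2 R m n *m c = normv c *: (P2 R m n *m U 0).
    by rewrite Uu0 -scalemxAr scalerA divff ?scale1r ?normv_neq0.
  by rewrite memSZ // Sm_gen2.
rewrite exprS -mulmxE -!mulmxA; apply: Sm_shift; last first.
  by rewrite mulmxA; apply: IH; apply: ltnW.
move=> i' hi'.
have [h1 h2] := nb i'.+1 (ltac:(apply/andP; split; lia)).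
by split; rewrite gt_eqF.
Qed.

Lemma colW k (j : 'I_(2 * k)) :
  col j (Wmat A B b c k) = if odd j then P2 R m n *m U j./2 else P1 R m n *m V j./2.
Proof.
have hj : (j./2 <= k.-1)%N by have := ltn_ord j; lia.
apply/matrixP => r s; rewrite (ord1 s) !mxE /=.
rewrite (ohr_nth A B b c hj).1 (ohr_nth A B b c hj).2.
by case: odd; rewrite ?P1E ?P2E.
Qed.

End Main2.

Unset Implicit Arguments. Set Strict Implicit.

Theorem mainTheorem5 (R : rcfType) (m n : nat)
  (A : 'M[R]_(m, n)) (B : 'M[R]_(n, m)) (b : 'cV[R]_m) (c : 'cV[R]_n)
  (lam mu : R) (k : nat) :
  b != 0 -> c != 0 -> (1 <= k)%N -> no_breakdown A B b c k.-1 ->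
  let K : 'M[R]_(m + n) := block_mx lam%:M A B mu%:M in
  let d : 'cV[R]_(m + n) := col_mx b c in
  let D : 'M[R]_(m + n, 1 + 1) := block_mx b 0 0 c in
  let W := Wmat A B b c k in
  [/\ (W^T == krylov K D k)%MS,
      (krylov K d k <= krylov K D k)%MS &
      exists z : 'cV[R]_(2 * k),
        (forall z' : 'cV[R]_(2 * k),
            normv (d - K *m W *m z) <= normv (d - K *m W *m z')) /\
        (forall x : 'cV[R]_(m + n), (x^T <= krylov K d k)%MS ->
            normv (d - K *m W *m z) <= normv (d - K *m x))].
Proof.
move=> hb hc hk nb K d D W.
have e1a : (W^T <= Sm A B b c k)%MS.
  apply/row_subP => j; rewrite -tr_col colW.
  have hj : (j./2 < k)%N by have := ltn_ord j; lia.
  by case: odd; [apply: Sm_gen2 | apply: Sm_gen1].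
have e1b : (Sm A B b c k <= W^T)%MS.
  apply/sumsmx_subP => i _; rewrite addsmx_sub !genmxE.
  have ij : (i.*2 < 2 * k)%N by have := ltn_ord i; lia.
  have ij1 : (i.*2.+1 < 2 * k)%N by have := ltn_ord i; lia.
  have := row_sub (Ordinal ij) W^T; rewrite -tr_col colW /= odd_double doubleK => ->.
  have := row_sub (Ordinal ij1) W^T; rewrite -tr_col colW /= odd_double /= uphalf_double => ->.
  by [].
have e2a : (Sm A B b c k <= krylov K D k)%MS.
  apply/sumsmx_subP => i _; rewrite addsmx_sub !genmxE.
  have hi : (i <= k.-1)%N by have := ltn_ord i; lia.
  have [h1 h2] := kryV A B b c lam mu hi.
  by rewrite (prednK hk) in h1 h2; apply/andP; split; [exact: h1 | exact: h2].
have e2b : (krylov K D k <= Sm A B b c k)%MS.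
  apply/sumsmx_subP => i _; rewrite genmxE; apply/row_subP => r.
  rewrite -tr_col colE.
  have h := SmD lam mu (delta_mx r 0) hb hc nb (ltn_ord i).
  exact: (memS_le (Sm_mono A B b c (ltn_ord i)) h).
have eWK : (W^T <= krylov K D k)%MS /\ (krylov K D k <= W^T)%MS.
  by split; [apply: submx_trans e1a e2a | apply: submx_trans e2b e1b].
have kdD : (krylov K d k <= krylov K D k)%MS.
  apply: sumsmxS => i _; rewrite !genmxE.
  have -> : d = D *m col_mx 1%:M 1%:M.
    by rewrite /d /D mul_block_col !mulmx1 addr0 add0r.
  by rewrite mulmxA trmx_mul submxMl.
have [z hz] := lsq (K *m W) d.
split => //; first by apply/andP; case: eWK.
exists z; split => // x hx.
have : (x^T <= W^T)%MS by apply: submx_trans (submx_trans hx kdD) eWK.2.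
case/submxP => w hw.
have -> : x = W *m w^T by rewrite -(trmxK x) hw trmx_mul trmxK.
by rewrite mulmxA.
Qed.
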